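(* Let $k\in\{1,\dots,d\}$ and $p\ge 1$. Then the function $R:\mathbb{P}_d\to\mathbb{R}$ defined by $R(X)=\left|\sum_{j=1}^k\lambda_j^{\downarrow}(X)\right|^p$ is geodesically convex on $\mathbb{P}_d$.
   Context: $\mathbb{P}_d$ denotes the set of real symmetric $d\times d$ positive definite matrices, equipped with the affine-invariant Riemannian metric $\langle U,V\rangle_X=\operatorname{tr}(X^{-1}UX^{-1}V)$, whose geodesic from $A$ to $B$ is $\gamma(t)=A^{1/2}(A^{-1/2}BA^{-1/2})^tA^{1/2}$, $t\in[0,1]$. A function $f$ on $\mathbb{P}_d$ is geodesically convex if $t\mapsto f(\gamma(t))$ is convex on $[0,1]$ for every such geodesic. $\lambda_1^{\downarrow}(X)\ge\dots\ge\lambda_d^{\downarrow}(X)$ denote the eigenvalues of $X$ in decreasing order. *)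

(* Defs.v *)
From mathcomp Require Import all_boot all_order all_algebra.
From mathcomp Require Import boolp reals exp.
Set Implicit Arguments. Unset Strict Implicit. Unset Printing Implicit Defensive.
Import Order.TTheory GRing.Theory Num.Theory.
Local Open Scope ring_scope.

Section PD.
Variables (R : realType) (d : nat).

Definition posdef (X : 'M[R]_d) : Prop :=
  X^T = X /\ forall v : 'rV[R]_d, v != 0 -> 0 < (v *m X *m v^T) 0 0.

Definition spec_decomp (X : 'M[R]_d) (Uw : 'M[R]_d * 'rV[R]_d) : Prop :=
  Uw.1 *m Uw.1^T = 1%:M /\ X = Uw.1 *m diag_mx Uw.2 *m Uw.1^T.

(* real power X^t via spectral calculus (meaningful for X posdef; the
   result does not depend on the chosen diagonalization) *)
Definition mpow (X : 'M[R]_d) (t : R) : 'M[R]_d :=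
  match pselect (exists Uw, spec_decomp X Uw) with
  | left h => let Uw := projT1 (cid h) in
      Uw.1 *m diag_mx (map_mx (fun x => powR x t) Uw.2) *m Uw.1^T
  | right _ => X
  end.

Definition geodesic (A B : 'M[R]_d) (t : R) : 'M[R]_d :=
  mpow A (2^-1) *m mpow (mpow A (- 2^-1) *m B *m mpow A (- 2^-1)) t
    *m mpow A (2^-1).

(* eigenvalues in decreasing order, with multiplicity: the decreasingly
   sorted list of roots of the characteristic polynomial (exists for real
   symmetric matrices; empty list otherwise) *)
Definition eigs_dec (X : 'M[R]_d) : seq R :=
  match pselect (exists s : seq R, sorted (fun x y => y <= x) s /\
                   char_poly X = \prod_(a <- s) ('X - a%:P)) with
  | left h => projT1 (cid h)
  | right _ => [::]
  end.

(* lambda_j^down(X), 1-indexed *)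
Definition eig_dec (X : 'M[R]_d) (j : nat) : R := nth 0 (eigs_dec X) j.-1.

Definition geod_convex (f : 'M[R]_d -> R) : Prop :=
  forall A B : 'M[R]_d, posdef A -> posdef B ->
  forall s u a : R, 0 <= s <= 1 -> 0 <= u <= 1 -> 0 <= a <= 1 ->
    f (geodesic A B ((1 - a) * s + a * u))
      <= (1 - a) * f (geodesic A B s) + a * f (geodesic A B u).

End PD.

(* Main.v *)
Require Import Defs.
From mathcomp Require Import all_boot all_order all_algebra.
From mathcomp Require Import boolp reals exp.
From mathcomp Require Import zify ring lra sequences complex convex hoelder interval_inference perm.
Import Order.TTheory GRing.Theory Num.Theory.
Local Open Scope ring_scope.

Section Scalar.
Variable R : realType.

Lemma expR_conv (a x y : R) : 0 <= a <= 1 ->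
  expR ((1 - a) * x + a * y) <= (1 - a) * expR x + a * expR y.
Proof.
case/andP=> a0 a1.
have := @convex_expR R (Itv01 a0 a1) y x.
by rewrite !convRE /= addrC [X in _ <= X]addrC.
Qed.

Lemma powR_conv_t (m s u a : R) : 0 <= s -> 0 <= u -> 0 <= a <= 1 ->
  powR m ((1 - a) * s + a * u) <= (1 - a) * powR m s + a * powR m u.
Proof.
move=> s0 u0 /andP[a0 a1].
rewrite /powR; case: eqP => [_|_]; last first.
  by rewrite mulrDl -!mulrA expR_conv ?a0.
have a1' : 0 <= 1 - a by rewrite subr_ge0.
case: (eqVneq ((1 - a) * s + a * u) 0) => [H|H]; last first.
  by rewrite /= addr_ge0 // mulr_ge0.
move/eqP: (H); rewrite paddr_eq0 ?mulr_ge0 // !mulf_eq0 => /andP[H1 H2] /=.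
case/orP: H1 => [/eqP H1|/eqP ->]; case/orP: H2 => [/eqP H2| /eqP ->]; rewrite ?eqxx.
all: try lra.
all: case: (s == 0); case: (u == 0); rewrite /= ?mulr1 ?mulr0; lra.
Qed.

Lemma powR_conv_x (p x y a : R) : 1 <= p -> 0 <= x -> 0 <= y -> 0 <= a <= 1 ->
  powR ((1 - a) * x + a * y) p <= (1 - a) * powR x p + a * powR y p.
Proof.
move=> p1 x0 y0 /andP[a0 a1].
have := @convex_powR R p p1 (Itv01 a0 a1) y x.
rewrite convRE /= => H.
have -> : (1 - a) * x + a * y = a * y + (1 - a) * x by rewrite addrC.
rewrite [X in _ <= X]addrC; apply: H.
  by apply: classical_sets.mem_set; rewrite /= in_itv /= y0.
by apply: classical_sets.mem_set; rewrite /= in_itv /= x0.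
Qed.

End Scalar.

Section H.
Variable R : realType.

Lemma sqsumE n (x : 'rV[R]_n) : (x *m x^T) 0 0 = \sum_j x 0 j ^+ 2.
Proof. by rewrite mxE; apply: eq_bigr => j _; rewrite mxE expr2. Qed.

Lemma sqsum_ge0 n (x : 'rV[R]_n) : 0 <= (x *m x^T) 0 0.
Proof. by rewrite sqsumE sumr_ge0 // => j _; rewrite sqr_ge0. Qed.

Lemma sqsum_eq0 n (x : 'rV[R]_n) : ((x *m x^T) 0 0 == 0) = (x == 0).
Proof.
apply/idP/idP => [|/eqP->]; last by rewrite mul0mx mxE.
rewrite sqsumE psumr_eq0 => [/allP H|j _]; last by rewrite sqr_ge0.
apply/eqP/rowP => j; rewrite mxE; apply/eqP.
by have := H j (mem_index_enum j); rewrite sqrf_eq0.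
Qed.

Lemma householder {n} {v : 'rV[R]_n.+1} : v *m v^T = 1%:M ->
  exists H : 'M[R]_n.+1, H *m H^T = 1%:M /\ row 0 H = v.
Proof.
move=> vv.
pose e : 'rV[R]_n.+1 := delta_mx 0 0.
pose w := e - v.
have [w0|wn0] := eqVneq w 0.
  exists 1%:M; rewrite trmx1 mulmx1 row1; split => //.
  by move/eqP: w0; rewrite subr_eq0 => /eqP.
pose q := (w *m w^T) 0 0.
have qn0 : q != 0 by rewrite /q sqsum_eq0.
pose P := w^T *m w.
pose c := 2 / q.
have ww : w *m w^T = q%:M by rewrite [LHS]mx11_scalar.
have PP : P *m P = q *: P.
  by rewrite /P mulmxA -[w^T *m w *m w^T]mulmxA ww mul_mx_scalar -scalemxAl.
have Pt : P^T = P by rewrite /P trmx_mul trmxK.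
exists (1%:M - c *: P); split.
  have Ht : (1%:M - c *: P)^T = 1%:M - c *: P.
    apply/matrixP => i j; rewrite !mxE eq_sym; congr (_ - c * _).
    by apply: eq_bigr => l _; rewrite !mxE mulrC.
  rewrite Ht mulmxBl mul1mx mulmxBr mulmx1 -scalemxAl -scalemxAr.
  rewrite PP !scalerA -scalerBl.
  have cq : c * q = 2 by rewrite /c mulfVK.
  have -> : c - c * c * q = - c by rewrite -mulrA cq; lra.
  by rewrite scaleNr opprK subrK.
rewrite rowE (mulmxBr (delta_mx 0 0)) mulmx1 -scalemxAr /P mulmxA -/e.
have ew : e *m w^T = (w 0 0)%:M.
  by rewrite /e -rowE [LHS]mx11_scalar !mxE.
have w00 : w 0 0 = 1 - v 0 0 by rewrite !mxE eqxx.
have q2 : q = 2 * (1 - v 0 0).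
  have ev : e *m v^T = (v 0 0)%:M.
    by rewrite /e -rowE [LHS]mx11_scalar !mxE.
  have ve : v *m e^T = (v 0 0)%:M.
    by rewrite -[v *m e^T]trmxK trmx_mul trmxK ev tr_scalar_mx.
  have ee : e *m e^T = 1%:M.
    by rewrite /e -rowE [LHS]mx11_scalar !mxE.
  rewrite /q /w linearB /= mulmxBl !mulmxBr ev ve ee vv !mxE /=; lra.
rewrite ew mul_scalar_mx scalerA.
have -> : c * w 0 0 = 1.
  rewrite /c w00 q2 invfM mulrA mulfV ?mul1r ?pnatr_eq0 // mulVf //.
  by apply: contra qn0; rewrite q2 => /eqP ->; rewrite mulr0.
by rewrite scale1r /w opprB addrC subrK.
Qed.

Lemma sym_eigen {n} {A : 'M[R]_n.+1} : A^T = A -> exists a, eigenvalue A a.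
Proof.
move=> As.
pose f := real_complex R.
pose Ac := map_mx f A.
have [z] := eigenvalue_closed Ac (ltn0Sn n).
move=> /eigenvalueP [v vAz vnz].
pose vc := map_mx (@conjc R) v.
have Acc : map_mx (@conjc R) Ac = Ac.
  by apply/matrixP => i j; rewrite !mxE conjc_real.
have Act : Ac^T = Ac.
  by apply/matrixP => i j; rewrite !mxE -[in LHS]As mxE.
have vcA : vc *m Ac = (conjc z) *: vc.
  have := congr1 (map_mx (@conjc R)) vAz.
  by rewrite map_mxM Acc map_mxZ.
pose N := (v *m vc^T) 0 0.
have E1 : (v *m Ac *m vc^T) 0 0 = z * N by rewrite vAz -scalemxAl mxE.
have E2 : (vc *m Ac *m v^T) 0 0 = conjc z * (vc *m v^T) 0 0 by rewrite vcA -scalemxAl mxE.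
have E3 : (vc *m Ac *m v^T) = (v *m Ac *m vc^T)^T.
  by rewrite !trmx_mul trmxK Act mulmxA.
have E4 : (vc *m v^T) = (v *m vc^T)^T by rewrite trmx_mul trmxK.
have Nn0 : N != 0.
  apply: contra vnz => /eqP N0; apply/eqP/rowP => j; rewrite mxE.
  have : \sum_j (v 0 j * conjc (v 0 j)) = 0.
    rewrite -[RHS]N0 /N mxE; by apply: eq_bigr => i _; rewrite !mxE.
  move/psumr_eq0P => H.
  have /eqP := H (fun i _ => mulcJ_ge0 (v 0 i)) j isT.
  by rewrite mulf_eq0 conjc_eq0 orbb => /eqP.
have zr : z = conjc z.
  apply: (mulIf Nn0); rewrite -E1.
  transitivity ((vc *m Ac *m v^T) 0 0); first by rewrite E3 [RHS]mxE.
  by rewrite E2 E4 mxE.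
clear E1 E2 vcA; case: z zr vAz => [x y] zr vAz.
have yy : y = - y by case: zr.
have y0 : y = 0 by lra.
exists x; rewrite -(eigenvalue_map f) /=.
apply/eigenvalueP; exists v => //.
by rewrite y0 complexr0 in vAz.
Qed.

Lemma spectral_real n (A : 'M[R]_n) : A^T = A ->
  exists U : 'M[R]_n, exists w : 'rV[R]_n,
    U *m U^T = 1%:M /\ A = U *m diag_mx w *m U^T.
Proof.
elim: n A => [|n IH] A As.
  exists 1%:M, 0; split; first by rewrite trmx1 mulmx1.
  by apply/matrixP => [[]].
have [a /eigenvalueP [v0 vA v0n]] := sym_eigen As.
pose r := (v0 *m v0^T) 0 0.
have r0 : 0 < r by rewrite lt0r sqsum_eq0 v0n sqsum_ge0.
pose v := (Num.sqrt r)^-1 *: v0.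
have vv : v *m v^T = 1%:M.
  rewrite /v linearZ /= -scalemxAl -scalemxAr scalerA [v0 *m v0^T]mx11_scalar -/r.
  rewrite -invfM -expr2 sqr_sqrtr ?ltW // scale_scalar_mx mulVf //.
  by rewrite gt_eqF.
have vA' : v *m A = a *: v by rewrite /v -scalemxAl vA !scalerA mulrC.
clearbody v.
have [H [HH Hr]] := householder vv.
have Hu : usubmx (H : 'M_(1 + n, 1 + n)) = v.
  rewrite -Hr; apply/matrixP => i j; rewrite !mxE ord1; congr (H _ j).
  exact: val_inj.
pose H' := dsubmx (H : 'M_(1 + n, 1 + n)).
pose Hc : 'M[R]_(1 + n) := col_mx v H'.
have HcE : H = Hc by rewrite /Hc -Hu vsubmxK.
have HcHc : Hc *m Hc^T = 1%:M by rewrite -HcE.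
have HcHc' : Hc^T *m Hc = 1%:M by apply: mulmx1C.
have HB := HcHc.
rewrite /Hc tr_col_mx mul_col_row (scalar_mx_block 1 n 1) in HB.
case/eq_block_mx: HB => _ vH' H'v H'H'.
pose A' := H' *m A *m H'^T.
have A's : A'^T = A' by rewrite /A' !trmx_mul trmxK As mulmxA.
have [U' [w' [U'U' A'E]]] := IH A' A's.
pose B : 'M[R]_(1 + n) := block_mx 1%:M 0 0 U'.
have BB : B *m B^T = 1%:M.
  rewrite /B tr_block_mx !trmx0 trmx1 mulmx_block.
  by rewrite !mulmx0 !mul0mx !addr0 !add0r mulmx1 U'U' -scalar_mx_block.
have HAH : Hc *m A *m Hc^T = block_mx a%:M 0 0 A'.
  rewrite /Hc mul_col_mx tr_col_mx mul_col_row vA'.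
  rewrite -!scalemxAl vv vH' scalemx1 scaler0.
  have -> : H' *m A *m v^T = 0.
    by rewrite -mulmxA -[A *m v^T]trmxK trmx_mul trmxK As vA' linearZ /= -scalemxAr H'v scaler0.
  by [].
exists (Hc^T *m B), (row_mx (a%:M : 'rV_1) w'); split.
  rewrite trmx_mul trmxK mulmxA -[Hc^T *m B *m B^T]mulmxA BB mulmx1.
  exact: HcHc'.
have d1 : diag_mx (a%:M : 'rV_1) = a%:M.
  by apply/matrixP => i j; rewrite !ord1 !mxE.
have BDB : B *m diag_mx (row_mx (a%:M : 'rV_1) w') *m B^T = block_mx a%:M 0 0 A'.
  rewrite diag_mx_row d1 /B tr_block_mx !trmx0 trmx1 !mulmx_block.
  by rewrite !mulmx0 !mul0mx !addr0 !add0r !mulmx1 !mul1mx A'E mul0mx.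
rewrite trmx_mul trmxK.
have -> : Hc^T *m B *m diag_mx (row_mx (a%:M : 'rV_1) w') *m (B^T *m Hc) =
   Hc^T *m (B *m diag_mx (row_mx (a%:M : 'rV_1) w') *m B^T) *m Hc by rewrite !mulmxA.
by rewrite BDB -HAH !mulmxA HcHc' mul1mx -mulmxA HcHc' mulmx1.
Qed.
End H.

Section KF.
Variables (R : realType) (d : nat).

Lemma char_poly_decomp (U : 'M[R]_d) (w : 'rV[R]_d) : U *m U^T = 1%:M ->
  char_poly (U *m diag_mx w *m U^T) = \prod_i ('X - (w 0 i)%:P).
Proof.
move=> UU.
pose P := map_mx (@polyC R) U.
have PT : P^T = map_mx (@polyC R) U^T by apply/matrixP => i j; rewrite !mxE.
have PP : P *m P^T = 1%:M by rewrite PT /P -map_mxM UU map_mx1.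
have E : char_poly_mx (U *m diag_mx w *m U^T) = P *m char_poly_mx (diag_mx w) *m P^T.
  rewrite /char_poly_mx mulmxBr mulmxBl !map_mxM -PT -/P.
  by rewrite mul_mx_scalar -scalemxAl PP -mul_scalar_mx mulmx1.
rewrite /char_poly E !det_mulmx mulrAC -det_mulmx PP det1 mul1r.
rewrite -/(char_poly _) char_poly_trig ?diag_mx_is_trig //.
by apply: eq_bigr => i _; rewrite mxE eqxx mulr1n.
Qed.

Definition ge_rel := fun x y : R => y <= x.

Lemma eigs_spec (U : 'M[R]_d) (w : 'rV[R]_d) (X : 'M[R]_d) :
  U *m U^T = 1%:M -> X = U *m diag_mx w *m U^T ->
  sorted (fun x y : R => y <= x) (eigs_dec X) /\
  perm_eq (eigs_dec X) [seq w 0 i | i <- enum 'I_d].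
Proof.
move=> UU XE.
have cp : char_poly X = \prod_(a <- [seq w 0 i | i <- enum 'I_d]) ('X - a%:P).
  by rewrite XE char_poly_decomp // big_map big_enum.
rewrite /eigs_dec; case: pselect => [h|nh].
  case: (cid h) => s [ss cs] /=; split => //.
  by apply: prod_XsubC_eq; rewrite -cs cp.
exfalso; apply: nh.
exists (sort (fun x y : R => y <= x) [seq w 0 i | i <- enum 'I_d]); split.
  by apply: sort_sorted => x y; apply: le_total.
by rewrite cp; apply: perm_big; rewrite perm_sym perm_sort.
Qed.


Lemma tr_quad m (W : 'M[R]_(d, m)) (w : 'rV[R]_d) :
  \tr (W^T *m diag_mx w *m W) = \sum_i w 0 i * \sum_j W i j ^+ 2.
Proof.
rewrite /mxtrace.
transitivity (\sum_j \sum_i w 0 i * W i j ^+ 2).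
  apply: eq_bigr => j _; rewrite mxE; apply: eq_bigr => i _.
  by rewrite mul_mx_diag !mxE expr2; ring.
by rewrite exchange_big; apply: eq_bigr => i _; rewrite mulr_sumr.
Qed.

Lemma proj_diag m (W : 'M[R]_(d, m)) : W^T *m W = 1%:M ->
  (forall i, 0 <= \sum_j W i j ^+ 2 <= 1) /\ \sum_i \sum_j W i j ^+ 2 = m%:R.
Proof.
move=> WW.
pose P := W *m W^T.
have hE i : \sum_j W i j ^+ 2 = P i i.
  by rewrite mxE; apply: eq_bigr => j _; rewrite mxE expr2.
have PP : P *m P = P by rewrite /P mulmxA -[W *m W^T *m W]mulmxA WW mulmx1.
have Pt i j : P j i = P i j by rewrite !mxE; apply: eq_bigr => l _; rewrite !mxE mulrC.
have trP : \tr P = m%:R by rewrite /P mxtrace_mulC WW mxtrace1.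
clearbody P.
split.
  move=> i; rewrite hE.
  have h0 : 0 <= P i i by rewrite -hE sumr_ge0 // => j _; rewrite sqr_ge0.
  have : P i i ^+ 2 <= P i i.
    rewrite -{2}PP mxE (bigD1 i) //= Pt -expr2 lerDl.
    by rewrite sumr_ge0 // => j _; rewrite Pt -expr2 sqr_ge0.
  by rewrite h0 /=; nra.
rewrite (eq_bigr (fun i => P i i)); last by move=> i _; rewrite hE.
by rewrite -/(mxtrace P) trP.
Qed.


Lemma weighted_ub (k : nat) (s : seq R) (w h : 'I_d -> R) :
  (1 <= k <= d)%N -> sorted (fun x y : R => y <= x) s ->
  perm_eq s [seq w i | i <- enum 'I_d] ->
  (forall i, 0 <= h i <= 1) -> \sum_i h i = k%:R ->
  \sum_i w i * h i <= \sum_(j < k) nth 0 s j.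
Proof.
move=> /andP[k1 kd] Hs Hp Hh Hsum.
have ss : size s = d by rewrite (perm_size Hp) size_map size_enum_ord.
pose c := nth 0 s k.-1.
have tr : transitive (fun x y : R => y <= x) by move=> y x z h1 h2; apply: le_trans h2 h1.
have rf : reflexive (fun x y : R => y <= x) by move=> x; apply: lexx.
have Hge j : (j < k)%N -> c <= nth 0 s j.
  move=> jk; apply: (sorted_leq_nth tr rf 0 Hs); rewrite ?unfold_in /= ?ss; lia.
have Hle j : (k <= j < d)%N -> nth 0 s j <= c.
  move=> /andP[kj jd]; apply: (sorted_leq_nth tr rf 0 Hs); rewrite ?unfold_in /= ?ss; lia.
pose f := fun x : R => Num.max (x - c) 0.
have S1 : \sum_i w i * h i = \sum_i (w i - c) * h i + c * k%:R.
  rewrite -Hsum mulr_sumr -big_split /=; apply: eq_bigr => i _; ring.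
have S2 : \sum_i (w i - c) * h i <= \sum_i f (w i).
  apply: ler_sum => i _; rewrite /f le_max.
  have := Hh i; case: (leP 0 (w i - c)) => H /andP[h0 h1]; apply/orP; [left|right]; nra.
have S3 : \sum_i f (w i) = \sum_(x <- s) f x.
  by rewrite (perm_big _ Hp) big_map big_enum.
have S4 : \sum_(x <- s) f x = \sum_(j < k) (nth 0 s j - c).
  rewrite (big_nth 0) ss (big_cat_nat _ kd) //=.
  rewrite [X in _ + X]big_nat_cond [X in _ + X]big1 ?addr0; last first.
    move=> j /andP[/andP[kj jd] _]; rewrite /f; apply/max_idPr.
    by rewrite subr_le0 Hle // kj.
  rewrite big_mkord; apply: eq_bigr => j _; rewrite /f; apply/max_idPl.
  by rewrite subr_ge0 Hge.
have H : \sum_i (w i - c) * h i <= \sum_(j < k) (nth 0 s j - c) by rewrite -S4 -S3.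
rewrite S1; apply: le_trans (lerD H (lexx (c * k%:R))) _.
rewrite sumrB sumr_const card_ord mulr_natr subrK.
exact: lexx.
Qed.


Definition KF k (X : 'M[R]_d) := \sum_(1 <= j < k.+1) eig_dec X j.

Lemma KFE k X : KF k X = \sum_(j < k) nth 0 (eigs_dec X) j.
Proof.
by rewrite /KF big_add1 /= big_mkord; apply: eq_bigr => j _; rewrite /eig_dec.
Qed.

Lemma KF_ub k (U : 'M[R]_d) w X (V : 'M[R]_(d, k)) : (1 <= k <= d)%N ->
  U *m U^T = 1%:M -> X = U *m diag_mx w *m U^T -> V^T *m V = 1%:M ->
  \tr (V^T *m X *m V) <= KF k X.
Proof.
move=> kd UU XE VV.
pose W := U^T *m V.
have WT : W^T = V^T *m U by rewrite /W trmx_mul trmxK.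
have WW : W^T *m W = 1%:M.
  by rewrite WT /W mulmxA -[V^T *m U *m U^T]mulmxA UU mulmx1.
have -> : V^T *m X *m V = W^T *m diag_mx w *m W.
  by rewrite WT XE /W !mulmxA.
rewrite tr_quad KFE.
have [Hh Hs] := proj_diag _ _ WW.
have [Ss Sp] := eigs_spec _ _ _ UU XE.
exact: (weighted_ub _ _ _ _ kd Ss Sp Hh Hs).
Qed.

Lemma KF_att k (U : 'M[R]_d) w X : (1 <= k <= d)%N ->
  U *m U^T = 1%:M -> X = U *m diag_mx w *m U^T ->
  exists V : 'M[R]_(d, k), V^T *m V = 1%:M /\ \tr (V^T *m X *m V) = KF k X.
Proof.
move=> /andP[k1 kd] UU XE.
have [Ss Sp] := eigs_spec _ _ _ UU XE.
have Sp' : perm_eq (eigs_dec X) [tuple w 0 i | i < d] by [].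
have [p Hp] := tuple_permP Sp'.
pose f := fun j : 'I_k => p (widen_ord kd j).
have finj : injective f.
  move=> j j' /perm_inj /(congr1 val) /= H; exact: val_inj.
pose E : 'M[R]_(d, k) := \matrix_(i, j) ((i == f j)%:R).
have EE : E^T *m E = 1%:M.
  apply/matrixP => j j'; rewrite !mxE (bigD1 (f j)) //= !mxE eqxx mul1r.
  rewrite big1 ?addr0; last by move=> i /negbTE Hi; rewrite !mxE Hi mul0r.
  by rewrite (inj_eq finj).
have UTU : U^T *m U = 1%:M by apply: mulmx1C.
exists (U *m E); split.
  by rewrite trmx_mul mulmxA -[E^T *m U^T *m U]mulmxA UTU mulmx1.
have -> : (U *m E)^T *m X *m (U *m E) = E^T *m diag_mx w *m E.
  rewrite trmx_mul XE !mulmxA -[E^T *m U^T *m U]mulmxA UTU mulmx1.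
  by rewrite -[E^T *m diag_mx w *m U^T *m U]mulmxA UTU mulmx1.
rewrite tr_quad KFE.
transitivity (\sum_i \sum_j w 0 i * (i == f j)%:R).
  apply: eq_bigr => i _; rewrite mulr_sumr; apply: eq_bigr => j _.
  by rewrite mxE; case: (i == f j); rewrite ?expr1n ?expr0n.
rewrite exchange_big; apply: eq_bigr => j _.
rewrite (bigD1 (f j)) //= eqxx mulr1 big1 ?addr0; last first.
  by move=> i /negbTE ->; rewrite mulr0.
rewrite Hp.
have -> : (j : nat) = widen_ord kd j by [].
by rewrite nth_mktuple tnth_mktuple.
Qed.

End KF.

Section Main.
Variables (R : realType) (d : nat).

Lemma mpowE (X : 'M[R]_d) : X^T = X -> exists U : 'M[R]_d, exists w : 'rV[R]_d,
  [/\ U *m U^T = 1%:M, X = U *m diag_mx w *m U^T &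
   forall t, mpow X t = U *m diag_mx (map_mx (fun x => powR x t) w) *m U^T].
Proof.
move=> Xs; rewrite /mpow; case: pselect => [h|nh].
  case: (cid h) => [[U w] [UU XE]] /=.
  by exists U, w; split.
exfalso; apply: nh; have [U [w [UU XE]]] := spectral_real _ _ _ Xs.
by exists (U, w); split.
Qed.

Lemma sym_decomp_tr (U : 'M[R]_d) (w : 'rV[R]_d) :
  (U *m diag_mx w *m U^T)^T = U *m diag_mx w *m U^T.
Proof. by rewrite !trmx_mul trmxK tr_diag_mx mulmxA. Qed.

Lemma mpow_sym (X : 'M[R]_d) t : X^T = X -> (mpow X t)^T = mpow X t.
Proof.
move=> Xs; have [U [w [_ _ ->]]] := mpowE _ Xs; exact: sym_decomp_tr.
Qed.

Lemma final_step (x y z a p : R) : 1 <= p -> 0 <= x -> 0 <= y -> 0 <= z ->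
  0 <= a <= 1 -> x <= (1 - a) * y + a * z ->
  powR `|x| p <= (1 - a) * powR `|y| p + a * powR `|z| p.
Proof.
move=> p1 x0 y0 z0 ha H.
rewrite !ger0_norm //.
have ha' : 0 <= 1 - a by case/andP: ha => _ h; rewrite subr_ge0.
have a0 : 0 <= a by case/andP: ha.
apply: le_trans (powR_conv_x _ _ _ _ _ p1 y0 z0 ha).
apply: ge0_ler_powR; rewrite ?nnegrE //.
- by apply: le_trans p1.
- by rewrite addr_ge0 // mulr_ge0.
Qed.

End Main.

Theorem mainTheorem2 (R : realType) (d k : nat) (p : R) :
  (1 <= k <= d)%N -> 1 <= p ->
  geod_convex (fun X : 'M[R]_d =>
    powR `| \sum_(1 <= j < k.+1) eig_dec X j | p).
Proof.
move=> kd p1 A B [As _] [Bs _] s u a /andP[s0 s1] /andP[u0 u1] ha.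
pose S := mpow A (2^-1).
pose S' := mpow A (- 2^-1).
pose M := S' *m B *m S'.
have Ss : S^T = S by apply: mpow_sym.
have S's : S'^T = S' by apply: mpow_sym.
have Ms : M^T = M by rewrite /M !trmx_mul S's Bs mulmxA.
have [Q [mu [QQ _ Mt]]] := mpowE _ _ _ Ms.
have gE t : geodesic A B t =
    S *m (Q *m diag_mx (map_mx (fun x => powR x t) mu) *m Q^T) *m S.
  by rewrite /geodesic -/S' -/M Mt.
clearbody S S' M.
pose g (V : 'M[R]_(d, k)) t := \tr (V^T *m geodesic A B t *m V).
pose c (V : 'M[R]_(d, k)) i := \sum_j (Q^T *m S *m V) i j ^+ 2.
have gV V t : g V t = \sum_i powR (mu 0 i) t * c V i.
  rewrite /g gE.
  have -> : V^T *m (S *m (Q *m diag_mx (map_mx (fun x => powR x t) mu) *m Q^T) *m S) *m V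
     = (Q^T *m S *m V)^T *m diag_mx (map_mx (fun x => powR x t) mu) *m (Q^T *m S *m V).
    by rewrite !trmx_mul trmxK Ss !mulmxA.
  by rewrite tr_quad; apply: eq_bigr => i _; rewrite mxE.
have g0 V t : 0 <= g V t.
  by rewrite gV sumr_ge0 // => i _; rewrite mulr_ge0 ?powR_ge0 // sumr_ge0 // => j _; rewrite sqr_ge0.
have gconv V : g V ((1 - a) * s + a * u) <= (1 - a) * g V s + a * g V u.
  rewrite !gV !mulr_sumr -big_split /=; apply: ler_sum => i _.
  have c0 : 0 <= c V i by rewrite sumr_ge0 // => j _; rewrite sqr_ge0.
  have := powR_conv_t _ (mu 0 i) _ _ _ s0 u0 ha.
  move=> H; rewrite !mulrA -mulrDl; exact: (ler_wpM2r c0 H).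
have Gs t : (geodesic A B t)^T = geodesic A B t by rewrite gE !trmx_mul !trmxK Ss tr_diag_mx !mulmxA.
pose F t := KF R d k (geodesic A B t).
have Fub V t : V^T *m V = 1%:M -> g V t <= F t.
  move=> VV; have [U [w [UU XE]]] := spectral_real _ _ _ (Gs t).
  exact: KF_ub _ _ _ _ _ _ _ kd UU XE VV.
have Fatt t : exists V, V^T *m V = 1%:M /\ g V t = F t.
  have [U [w [UU XE]]] := spectral_real _ _ _ (Gs t).
  exact: KF_att _ _ _ _ _ _ kd UU XE.
have F0 t : 0 <= F t by have [V [_ <-]] := Fatt t.
have Fconv : F ((1 - a) * s + a * u) <= (1 - a) * F s + a * F u.
  have [V [VV <-]] := Fatt ((1 - a) * s + a * u).
  apply: le_trans (gconv V) _.
  have ha' : 0 <= 1 - a by case/andP: ha => _ h; rewrite subr_ge0.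
  have a0 : 0 <= a by case/andP: ha.
  by apply: lerD; apply: ler_wpM2l => //; apply: Fub.
exact: (final_step _ _ _ _ _ _ p1 (F0 _) (F0 s) (F0 u) ha Fconv).
Qed.
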